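(* Let $L,R$ be nonempty subsets of a group $G$. The two-sided group digraph $2\mathrm{S}(G;L,R)$ is weakly connected if and only if $G=\mathcal{W}(\bar{L})\mathcal{W}(\bar{R})$ and some element of $\bar{L}$ or of $\bar{R}$ is weakly connected to $e$.
   Context: For nonempty subsets $L,R$ of a group $G$, the two-sided group digraph $2\mathrm{S}(G;L,R)$ has vertex set $G$ and a directed arc $(g,h)$ if and only if $h=l^{-1}gr$ for some $l\in L$, $r\in R$. Write $\bar{L}=L\cup L^{-1}$, $\bar{R}=R\cup R^{-1}$; for nonempty $S$, $\mathcal{W}(S)$ is the set of elements expressible as finite products $s_1\cdots s_n$, $n\ge1$, $s_i\in S$. Vertex $g$ is weakly connected to $h$ if there is a sequence $g=g_0,\dots,g_n=h$ such that for each $i$ either $(g_{i-1},g_i)$ or $(g_i,g_{i-1})$ is an arc; the digraph is weakly connected if every pair of vertices is weakly connected. *)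

(* Defs.v *)
Set Implicit Arguments.

Record Group := {
  carrier :> Type;
  gmul : carrier -> carrier -> carrier;
  ginv : carrier -> carrier;
  gone : carrier;
  gmul_assoc : forall x y z, gmul x (gmul y z) = gmul (gmul x y) z;
  gmul_1l : forall x, gmul gone x = x;
  gmul_1r : forall x, gmul x gone = x;
  gmul_Vl : forall x, gmul (ginv x) x = gone;
  gmul_Vr : forall x, gmul x (ginv x) = gone
}.

Section TwoSided.
Context {G : Group}.

Definition arc2S (L R : G -> Prop) (g h : G) : Prop :=
  exists l r, L l /\ R r /\ h = gmul G (gmul G (ginv G l) g) r.

Inductive weakly_connected (L R : G -> Prop) : G -> G -> Prop :=
  | wc_refl : forall g, weakly_connected L R g g
  | wc_step : forall g k h,
      (arc2S L R g k \/ arc2S L R k g) ->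
      weakly_connected L R k h -> weakly_connected L R g h.

Definition digraph_weakly_connected (L R : G -> Prop) : Prop :=
  forall g h : G, weakly_connected L R g h.

Definition sbar (S : G -> Prop) (x : G) : Prop := S x \/ S (ginv G x).

Inductive Wprod (S : G -> Prop) : G -> Prop :=
  | W_one : forall s, S s -> Wprod S s
  | W_cons : forall s t, S s -> Wprod S t -> Wprod S (gmul G s t).

End TwoSided.

(* Main.v *)
Require Import Defs.

Section Proof.
Variable G : Group.
Local Notation "x * y" := (gmul G x y).
Local Notation "x ^-1" := (ginv G x) (at level 2, format "x ^-1").
Local Notation e := (gone G).

Lemma invK (x : G) : (x^-1)^-1 = x.
Proof.
  rewrite <- (gmul_1r G ((x^-1)^-1)). rewrite <- (gmul_Vl G x).
  rewrite gmul_assoc, gmul_Vl, gmul_1l. reflexivity.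
Qed.
Lemma mulKl (x y : G) : y^-1 * (y * x) = x.
Proof. rewrite gmul_assoc, gmul_Vl, gmul_1l. reflexivity. Qed.
Lemma mulVKl (x y : G) : y * (y^-1 * x) = x.
Proof. rewrite gmul_assoc, gmul_Vr, gmul_1l. reflexivity. Qed.
Lemma mulKr (x y : G) : (x * y) * y^-1 = x.
Proof. rewrite <- gmul_assoc, gmul_Vr, gmul_1r. reflexivity. Qed.
Lemma mulVKr (x y : G) : (x * y^-1) * y = x.
Proof. rewrite <- gmul_assoc, gmul_Vl, gmul_1r. reflexivity. Qed.

Variables L R : G -> Prop.
Local Notation wc := (weakly_connected L R).

Lemma wc_trans g k h : wc g k -> wc k h -> wc g h.
Proof.
  intros H1; revert h; induction H1; intros; auto.
  eapply wc_step; eauto.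
Qed.

Lemma arc_wc g h : arc2S L R g h -> wc g h.
Proof. intros; eapply wc_step; [left; eauto | constructor]. Qed.
Lemma arc_wc' g h : arc2S L R h g -> wc g h.
Proof. intros; eapply wc_step; [right; eauto | constructor]. Qed.

Lemma wc_sym g h : wc g h -> wc h g.
Proof.
  induction 1; [constructor|].
  eapply wc_trans; [eauto|].
  destruct H; [apply arc_wc'|apply arc_wc]; auto.
Qed.

Lemma mv1 g l r : L l -> R r -> wc g ((l^-1 * g) * r).
Proof. intros; apply arc_wc; exists l, r; auto. Qed.
Arguments mv1 g {l r}.

Lemma mv2 g l r : L l -> R r -> wc g ((l * g) * r^-1).
Proof.
  intros; apply arc_wc'; exists l, r; repeat split; auto.
  rewrite gmul_assoc, mulVKr, mulKl; reflexivity.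
Qed.
Arguments mv2 g {l r}.

Lemma G1 z l r : L l -> R r -> wc (l * z) (z * r).
Proof.
  intros. pose proof (mv1 (l * z) H H0). rewrite mulKl in H1. exact H1.
Qed.
Arguments G1 z {l r}.
Lemma G2 z l r : L l -> R r -> wc (l^-1 * z) (z * r^-1).
Proof.
  intros. pose proof (mv1 (z * r^-1) H H0).
  rewrite <- gmul_assoc, mulVKr in H1. apply wc_sym. exact H1.
Qed.
Arguments G2 z {l r}.

Lemma G3a y l r r' : L l -> R r -> R r' -> wc ((y * r^-1) * r') y.
Proof.
  intros. eapply wc_trans. apply wc_sym, (G1 (y * r^-1) H H1).
  rewrite gmul_assoc. apply wc_sym, mv2; auto.
Qed.
Arguments G3a y {l r r'}.

Lemma G3b y l r r' : L l -> R r -> R r' -> wc ((y * r) * r'^-1) y.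
Proof.
  intros. eapply wc_trans. apply wc_sym, (G2 (y * r) H H1).
  rewrite gmul_assoc. apply wc_sym, mv1; auto.
Qed.
Arguments G3b y {l r r'}.

Definition Q1 g := forall r, R r -> wc g (g * r).
Definition Q2 g := forall r, R r -> wc g (g * r^-1).

Lemma Q1_one g l r0 : L l -> R r0 -> wc g (g * r0) -> Q1 g.
Proof.
  intros Hl Hr H r' Hr'. eapply wc_trans; [exact H|].
  apply wc_sym. pose proof (G3a (g * r0) Hl Hr Hr') as K.
  rewrite mulKr in K. exact K.
Qed.

Lemma Q2_one g l r0 : L l -> R r0 -> wc g (g * r0^-1) -> Q2 g.
Proof.
  intros Hl Hr H r' Hr'. eapply wc_trans; [exact H|].
  apply wc_sym. pose proof (G3b (g * r0^-1) Hl Hr Hr') as K.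
  rewrite mulVKr in K. exact K.
Qed.

Lemma Q1_m1 g l r : L l -> R r -> Q1 g -> Q1 ((l^-1 * g) * r).
Proof.
  intros Hl Hr Hq r' Hr'.
  apply wc_trans with g; [apply wc_sym, mv1; auto|].
  apply wc_trans with (g * r); [auto|].
  pose proof (G2 ((g * r) * r') Hl Hr') as K. rewrite mulKr in K.
  apply wc_sym. rewrite <- !gmul_assoc. rewrite <- gmul_assoc in K. exact K.
Qed.

Lemma Q1_m2 g l r : L l -> R r -> Q1 g -> Q1 ((l * g) * r^-1).
Proof.
  intros Hl Hr Hq r' Hr'.
  apply wc_trans with g; [apply wc_sym, mv2; auto|].
  apply wc_trans with (g * r); [auto|].
  apply wc_trans with (l * g); [apply wc_sym, G1; auto|].
  apply wc_sym, (G3a (l * g) Hl Hr Hr').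
Qed.

Lemma Q2_m1 g l r : L l -> R r -> Q2 g -> Q2 ((l^-1 * g) * r).
Proof.
  intros Hl Hr Hq r' Hr'.
  apply wc_trans with g; [apply wc_sym, mv1; auto|].
  apply wc_trans with (g * r^-1); [auto|].
  apply wc_trans with (l^-1 * g); [apply wc_sym, G2; auto|].
  apply wc_sym, (G3b (l^-1 * g) Hl Hr Hr').
Qed.

Lemma Q2_m2 g l r : L l -> R r -> Q2 g -> Q2 ((l * g) * r^-1).
Proof.
  intros Hl Hr Hq r' Hr'.
  apply wc_trans with g; [apply wc_sym, mv2; auto|].
  apply wc_trans with (g * r^-1); [auto|].
  pose proof (G1 ((g * r^-1) * r'^-1) Hl Hr') as K. rewrite mulVKr in K.
  apply wc_sym. rewrite <- !gmul_assoc. rewrite <- gmul_assoc in K. exact K.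
Qed.

Lemma back_eq g l r : g = (l * ((l^-1 * g) * r)) * r^-1.
Proof. rewrite (gmul_assoc G l), mulKr, mulVKl. reflexivity. Qed.

Lemma Q1_inv g h : wc g h -> (Q1 g <-> Q1 h).
Proof.
  induction 1; [tauto|].
  assert (Q1 g <-> Q1 k); [|tauto].
  destruct H as [[l [r [Hl [Hr ->]]]]|[l [r [Hl [Hr ->]]]]]; split; intro Hq.
  - apply Q1_m1; auto.
  - rewrite (back_eq g l r). apply Q1_m2; auto.
  - rewrite (back_eq k l r). apply Q1_m2; auto.
  - apply Q1_m1; auto.
Qed.

Lemma Q2_inv g h : wc g h -> (Q2 g <-> Q2 h).
Proof.
  induction 1; [tauto|].
  assert (Q2 g <-> Q2 k); [|tauto].
  destruct H as [[l [r [Hl [Hr ->]]]]|[l [r [Hl [Hr ->]]]]]; split; intro Hq.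
  - apply Q2_m1; auto.
  - rewrite (back_eq g l r). apply Q2_m2; auto.
  - rewrite (back_eq k l r). apply Q2_m2; auto.
  - apply Q2_m1; auto.
Qed.

Lemma W_snoc (S : G -> Prop) t s : Wprod S t -> S s -> Wprod S (t * s).
Proof.
  induction 1; intros.
  - apply W_cons; auto. apply W_one; auto.
  - rewrite <- gmul_assoc. apply W_cons; auto.
Qed.

End Proof.

Theorem mainTheorem10 (G : Group) (L R : G -> Prop)
  (hL : exists l, L l) (hR : exists r, R r) :
  digraph_weakly_connected L R <->
  ((forall g : G, exists a b, Wprod (sbar L) a /\ Wprod (sbar R) b /\ g = gmul G a b) /\
   (exists x : G, (sbar L x \/ sbar R x) /\ weakly_connected L R x (gone G))).
Proof.
  destruct hL as [l0 Hl0]; destruct hR as [r0 Hr0].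
  split.
  - intro Hc. split.
    + assert (P : forall g h, weakly_connected L R g h ->
                (exists a b, Wprod (sbar L) a /\ Wprod (sbar R) b /\ h = gmul G a b) ->
                (exists a b, Wprod (sbar L) a /\ Wprod (sbar R) b /\ g = gmul G a b)).
      { induction 1; intro Hh; auto. specialize (IHweakly_connected Hh).
        destruct IHweakly_connected as [a [b [Ha [Hb Hk]]]].
        destruct H as [[l [r [Hl [Hr Hk']]]]|[l [r [Hl [Hr Hk']]]]].
        - exists (gmul G l a), (gmul G b (ginv G r)). repeat split.
          + apply W_cons; auto. left; auto.
          + apply W_snoc; auto. right. rewrite invK. auto.
          + rewrite (back_eq G g l r), <- Hk', Hk, !gmul_assoc. reflexivity.
        - exists (gmul G (ginv G l) a), (gmul G b r). repeat split.
          + apply W_cons; auto. right. rewrite invK. auto.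
          + apply W_snoc; auto. left; auto.
          + rewrite Hk', Hk, !gmul_assoc. reflexivity. }
      intro g. apply (P g (gone G)); [apply Hc|].
      exists (gmul G l0 (ginv G l0)), (gmul G r0 (ginv G r0)). repeat split.
      * apply W_cons; [left; auto|]. apply W_one. right. rewrite invK. auto.
      * apply W_cons; [left; auto|]. apply W_one. right. rewrite invK. auto.
      * rewrite !gmul_Vr, gmul_1l. reflexivity.
    + exists l0. split; [left; left; auto | apply Hc].
  - intros [HW [x [Hx Hxe]]].
    assert (Hr : exists r, R r /\ (weakly_connected L R (gone G) r \/
                     weakly_connected L R (gone G) (ginv G r))).
    { destruct Hx as [[Hx|Hx]|[Hx|Hx]].
      - exists r0; split; auto. left. apply wc_trans with x; [apply wc_sym; exact Hxe|].
        pose proof (G1 G L R (gone G) x r0 Hx Hr0) as K.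
        rewrite gmul_1r, gmul_1l in K. exact K.
      - exists r0; split; auto. right. apply wc_trans with x; [apply wc_sym; exact Hxe|].
        pose proof (G2 G L R (gone G) (ginv G x) r0 Hx Hr0) as K.
        rewrite gmul_1r, gmul_1l, invK in K. exact K.
      - exists x; split; auto. left. apply wc_sym; exact Hxe.
      - exists (ginv G x); split; auto. right. rewrite invK. apply wc_sym; exact Hxe. }
    assert (He : Q1 G L R (gone G) /\ Q2 G L R (gone G)).
    { destruct Hr as [r [Hr [H1|H1]]].
      - split.
        + apply (Q1_one G L R (gone G) l0 r Hl0 Hr). rewrite gmul_1l. exact H1.
        + apply (proj2 (Q2_inv G L R _ _ H1)).
          apply (Q2_one G L R r l0 r Hl0 Hr). rewrite gmul_Vr. apply wc_sym; exact H1.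
      - split.
        + apply (proj2 (Q1_inv G L R _ _ H1)).
          apply (Q1_one G L R (ginv G r) l0 r Hl0 Hr). rewrite gmul_Vl. apply wc_sym; exact H1.
        + apply (Q2_one G L R (gone G) l0 r Hl0 Hr). rewrite gmul_1l. exact H1. }
    assert (HC : forall g, weakly_connected L R g (gone G) ->
                 Q1 G L R g /\ Q2 G L R g).
    { intros g Hg. split.
      - apply (proj2 (Q1_inv G L R _ _ Hg)); tauto.
      - apply (proj2 (Q2_inv G L R _ _ Hg)); tauto. }
    destruct Hr as [r1 [Hr1 _]].
    assert (Rs : forall s, sbar R s -> forall y,
               weakly_connected L R y (gone G) -> weakly_connected L R (gmul G y s) (gone G)).
    { intros s Hs y Hy. destruct Hs as [H|H].
      + eapply wc_trans; [apply wc_sym, (proj1 (HC y Hy)); exact H| exact Hy].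
      + eapply wc_trans; [apply wc_sym|exact Hy].
        pose proof (proj2 (HC y Hy) _ H) as K. rewrite invK in K. exact K. }
    assert (Ls : forall s, sbar L s -> forall y,
               weakly_connected L R y (gone G) -> weakly_connected L R (gmul G s y) (gone G)).
    { intros s Hs y Hy. destruct Hs as [H|H].
      + eapply wc_trans; [apply (G1 G L R y s r1 H Hr1)|].
        eapply wc_trans; [apply wc_sym, (proj1 (HC y Hy)); exact Hr1| exact Hy].
      + eapply wc_trans.
        { pose proof (G2 G L R y (ginv G s) r1 H Hr1) as K. rewrite invK in K. exact K. }
        eapply wc_trans; [apply wc_sym, (proj2 (HC y Hy)); exact Hr1| exact Hy]. }
    assert (Rt : forall b, Wprod (sbar R) b -> forall y,
               weakly_connected L R y (gone G) -> weakly_connected L R (gmul G y b) (gone G)).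
    { induction 1; intros y Hy; auto.
      rewrite gmul_assoc. apply IHWprod. apply Rs; auto. }
    assert (Lt : forall a, Wprod (sbar L) a -> forall y,
               weakly_connected L R y (gone G) -> weakly_connected L R (gmul G a y) (gone G)).
    { induction 1; intros y Hy; auto.
      rewrite <- gmul_assoc. apply Ls; auto. }
    assert (All : forall g, weakly_connected L R g (gone G)).
    { intro g. destruct (HW g) as [a [b [Ha [Hb ->]]]].
      rewrite <- (gmul_1l G b). apply Lt; auto. apply Rt; auto. constructor. }
    intros g h. eapply wc_trans; [apply All| apply wc_sym, All].
Qed.
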